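(* In the setting of the mirror triangle method with inexact $(\delta,L)$-oracle (see context), for every step $k\ge0$ performed by the method and every $x\in Q$, $$A_{k+1}F(x_{k+1})-A_kF(x_k)+V(x,u_{k+1})-V(x,u_k)\le\alpha_{k+1}F(x)+2\delta A_{k+1}.$$
   Context: $\mathbb{R}^n$ carries a norm $\|\cdot\|$ with dual norm $\|\lambda\|_*=\max_{\|\nu\|\le1}\langle\lambda,\nu\rangle$; $Q$ closed convex; $f:Q\to\mathbb{R}$ convex continuous, differentiable with $L$-Lipschitz gradient ($\|\nabla f(x)-\nabla f(y)\|_*\le L\|x-y\|$); $h$ convex on $Q$; $F=f+h$. Prox-function $d$: continuously differentiable, $1$-strongly convex w.r.t. $\|\cdot\|$; $V(x,y)=d(x)-d(y)-\langle\nabla d(y),x-y\rangle$. A $(\delta,L)$-oracle returns for query $y\in Q$ a pair $(f_\delta(y),\nabla f_\delta(y))$ with $0\le f(x)-f_\delta(y)-\langle\nabla f_\delta(y),x-y\rangle\le\frac L2\|x-y\|^2+\delta$ for all $x\in Q$. Method (with $x_0\in Q$, $0<L_0\le L$): $y_0=u_0=x_0$, $L_1=L_0/2$, $\alpha_0=A_0=0$. Step $k+1$ with current $L_{k+1}$: (i) $\alpha_{k+1}$ is the largest root of $A_k+\alpha=L_{k+1}\alpha^2$, $A_{k+1}=A_k+\alpha_{k+1}$; (ii) $y_{k+1}=(\alpha_{k+1}u_k+A_kx_k)/A_{k+1}$; (iii) $u_{k+1}=\arg\min_{x\in Q}\{V(x,u_k)+\alpha_{k+1}(f_\delta(y_{k+1})+\langle\nabla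 f_\delta(y_{k+1}),x-y_{k+1}\rangle+h(x))\}$; (iv) $x_{k+1}=(\alpha_{k+1}u_{k+1}+A_kx_k)/A_{k+1}$; (v) if $f_\delta(x_{k+1})\le f_\delta(y_{k+1})+\langle\nabla f_\delta(y_{k+1}),x_{k+1}-y_{k+1}\rangle+\frac{L_{k+1}}2\|x_{k+1}-y_{k+1}\|^2+\delta$, set $L_{k+2}=L_{k+1}/2$ and go to the next step; otherwise replace $L_{k+1}$ by $2L_{k+1}$ and repeat step $k+1$. *)

(* Defs.v *)
From HB Require Import structures.
From mathcomp Require Import all_boot all_order all_algebra.
From mathcomp Require Import all_classical all_reals all_analysis.
Set Implicit Arguments. Unset Strict Implicit. Unset Printing Implicit Defensive.
Import Order.TTheory GRing.Theory Num.Theory.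
Import numFieldNormedType.Exports.
Local Open Scope classical_set_scope.
Local Open Scope ring_scope.

Section Defs.
Variables (R : realType) (n : nat).
Local Notation vec := 'rV[R]_n.

Definition dotp (l v : vec) : R := \sum_(i < n) l ord0 i * v ord0 i.

Definition is_norm (nrm : vec -> R) : Prop :=
  [/\ forall v, 0 <= nrm v,
      forall v, nrm v = 0 -> v = 0,
      forall (a : R) v, nrm (a *: v) = `|a| * nrm v &
      forall v w, nrm (v + w) <= nrm v + nrm w].

Definition dual_norm (nrm : vec -> R) (l : vec) : R :=
  sup [set dotp l v | v in [set v | nrm v <= 1]].

Definition convex_on (Q : set vec) (g : vec -> R) : Prop :=
  forall x y (t : R), Q x -> Q y -> 0 <= t <= 1 ->
    g (t *: x + (1 - t) *: y) <= t * g x + (1 - t) * g y.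

Definition has_gradient (g : vec -> R) (gr : vec) (x : vec) : Prop :=
  differentiable g x /\ forall v, 'd g x v = dotp gr v.

Definition strongly_convex1 (nrm : vec -> R) (Q : set vec) (d : vec -> R)
    (gradd : vec -> vec) : Prop :=
  forall x y, Q x -> Q y ->
    d x >= d y + dotp (gradd y) (x - y) + 2^-1 * nrm (x - y) ^+ 2.

Definition bregman (d : vec -> R) (gradd : vec -> vec) (x y : vec) : R :=
  d x - d y - dotp (gradd y) (x - y).

Definition inexact_oracle (nrm : vec -> R) (Q : set vec) (f : vec -> R)
    (delta L : R) (fd : vec -> R) (gd : vec -> vec) : Prop :=
  forall x y, Q x -> Q y ->
    0 <= f x - fd y - dotp (gd y) (x - y) /\
    f x - fd y - dotp (gd y) (x - y) <= L / 2 * nrm (x - y) ^+ 2 + delta.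

(** Accepted iterates of the mirror triangle method with backtracking.
    Lacc k is the value of L_{k+1} with which step k+1 was accepted. *)
Definition mtm_run (nrm : vec -> R) (Q : set vec) (h : vec -> R)
    (d : vec -> R) (gradd : vec -> vec) (delta L0 : R)
    (fd : vec -> R) (gd : vec -> vec) (x0 : vec)
    (Lacc alpha A : nat -> R) (y u x : nat -> vec) : Prop :=
  y 0%N = x0 /\ u 0%N = x0 /\ x 0%N = x0 /\ alpha 0%N = 0 /\ A 0%N = 0 /\
  forall k : nat,
    ((* L_{k+1} = (previous L)/2 * 2^j : j doublings in the backtracking *)
        exists j : nat,
          Lacc k = (if k is k'.+1 then Lacc k' else L0) / 2 * 2 ^+ j) /\
        (A k + alpha k.+1 = Lacc k * alpha k.+1 ^+ 2 /\
          (forall a, A k + a = Lacc k * a ^+ 2 -> a <= alpha k.+1)) /\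
        A k.+1 = A k + alpha k.+1 /\
        y k.+1 = (A k.+1)^-1 *: (alpha k.+1 *: u k + A k *: x k) /\
        (Q (u k.+1) /\
          (forall z, Q z ->
             bregman d gradd (u k.+1) (u k) + alpha k.+1 *
               (fd (y k.+1) + dotp (gd (y k.+1)) (u k.+1 - y k.+1) + h (u k.+1))
             <= bregman d gradd z (u k) + alpha k.+1 *
               (fd (y k.+1) + dotp (gd (y k.+1)) (z - y k.+1) + h z))) /\
        x k.+1 = (A k.+1)^-1 *: (alpha k.+1 *: u k.+1 + A k *: x k) /\
        fd (x k.+1) <= fd (y k.+1) + dotp (gd (y k.+1)) (x k.+1 - y k.+1)
                       + Lacc k / 2 * nrm (x k.+1 - y k.+1) ^+ 2 + delta.

End Defs.

(* Main.v *)
Require Import Defs.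
From HB Require Import structures.
From mathcomp Require Import all_boot all_order all_algebra.
From mathcomp Require Import all_classical all_reals all_analysis.
From mathcomp Require Import ring lra.
Import Order.TTheory GRing.Theory Num.Theory.
Import numFieldNormedType.Exports.
Local Open Scope classical_set_scope.
Local Open Scope ring_scope.
Lemma convQ (R : realType) (n : nat) (Q : set 'rV[R]_n) : convex_set Q ->
  forall x y (t : R), Q x -> Q y -> 0 <= t -> t <= 1 -> Q (t *: x + (1-t) *: y).
Proof.
move=> cQ x y t Qx Qy t0 t1.
have := cQ x y (Itv01 t0 t1) (mem_set Qx) (mem_set Qy).
by rewrite inE.
Qed.

Lemma dotpDr (R : realType) (n : nat) (l v w : 'rV[R]_n) :
  dotp l (v + w) = dotp l v + dotp l w.
Proof. by rewrite /dotp -big_split; apply: eq_bigr => i _; rewrite mxE mulrDr. Qed.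
Lemma dotpZr (R : realType) (n : nat) (l v : 'rV[R]_n) a :
  dotp l (a *: v) = a * dotp l v.
Proof. by rewrite /dotp mulr_sumr; apply: eq_bigr => i _; rewrite mxE mulrCA. Qed.
Lemma dotpNr (R : realType) (n : nat) (l v : 'rV[R]_n) :
  dotp l (- v) = - dotp l v.
Proof. by rewrite -scaleN1r dotpZr mulN1r. Qed.
Lemma dotpBl (R : realType) (n : nat) (l m v : 'rV[R]_n) :
  dotp (l - m) v = dotp l v - dotp m v.
Proof. by rewrite /dotp -sumrB; apply: eq_bigr => i _; rewrite !mxE mulrBl. Qed.

Lemma lim_ge (R : realType) (n : nat) (d : 'rV[R]_n -> R) (gr up v : 'rV[R]_n) (K : R) :
  has_gradient d gr up ->
  (forall t, 0 < t -> t <= 1 -> K <= t^-1 * (d (t *: v + up) - d up)) ->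
  K <= dotp gr v.
Proof.
move=> [dd dg] H.
have hd := @diff_derivable _ _ _ _ _ v dd.
have e1 : 'D_v d up = dotp gr v by rewrite deriveE // dg.
rewrite -e1.
have cg : (fun h : R => h^-1 *: ((d \o shift up) (h *: v) - d up)) @ 0^' --> 'D_v d up.
  exact: hd.
have cg' : (fun h : R => h^-1 *: ((d \o shift up) (h *: v) - d up)) @ 0^'+ --> 'D_v d up.
  move=> A /cg; rewrite /= !near_simpl /=.
  rewrite !near_withinE; apply: filterS => t Ht t0; apply: Ht; by rewrite gt_eqF.
apply: (@cvgr_to_ge _ _ (at_right_proper_filter 0) _ _ _ _ cg').
near=> t.
have t0 : 0 < t by near: t; exact: nbhs_right_gt.
have t1 : t <= 1 by near: t; exact: nbhs_right_le.
by have := H t t0 t1.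
Unshelve. all: by end_near.
Qed.
Lemma dotp_split (R : realType) (n : nat) (l a b c : 'rV[R]_n) :
  dotp l (a - c) = dotp l (a - b) + dotp l (b - c).
Proof. by rewrite -dotpDr addrA subrK. Qed.

Lemma three_point (R : realType) (n : nat) (Q : set 'rV[R]_n) d gradd
  (phi : 'rV[R]_n -> R) (u up z : 'rV[R]_n) :
  convex_set Q -> Q up -> Q z -> has_gradient d (gradd up) up ->
  convex_on Q phi ->
  (forall w, Q w -> bregman d gradd up u + phi up <= bregman d gradd w u + phi w) ->
  bregman d gradd up u + phi up + bregman d gradd z up
    <= bregman d gradd z u + phi z.
Proof.
move=> cQ Qup Qz hg cphi Hmin.
set v := z - up.
have K : dotp (gradd u) v - phi z + phi up <= dotp (gradd up) v.
  apply: (@lim_ge _ _ d (gradd up) up v _ hg) => t t0 t1.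
  have ew : t *: v + up = t *: z + (1 - t) *: up.
    by apply/rowP => i; rewrite !mxE; ring.
  have Qw : Q (t *: v + up) by rewrite ew; apply: convQ => //; apply: ltW.
  have h1 := Hmin _ Qw.
  have h2 : phi (t *: v + up) <= t * phi z + (1 - t) * phi up.
    by rewrite ew; apply: cphi => //; rewrite (ltW t0) t1.
  have h3 : bregman d gradd (t *: v + up) u - bregman d gradd up u
      = d (t *: v + up) - d up - t * dotp (gradd u) v.
    rewrite /bregman (dotp_split _ _ _ _ up) addrK dotpZr; ring.
  rewrite ler_pdivlMl //.
  lra.
have e : bregman d gradd z u - bregman d gradd up u - bregman d gradd z up
    = dotp (gradd up) v - dotp (gradd u) v.
  rewrite /bregman (dotp_split _ _ _ _ up); ring.
lra.
Qed.
Lemma root_pos (R : realType) (L A a : R) : 0 < L -> 0 <= A ->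
  (forall b, A + b = L * b ^+ 2 -> b <= a) -> 0 < a.
Proof.
move=> L0 A0 H.
set s := Num.sqrt (1 + 4 * L * A).
have s0 : 0 <= s by exact: sqrtr_ge0.
have hs : s ^+ 2 = 1 + 4 * L * A.
  rewrite /s sqr_sqrtr //; apply: addr_ge0 => //; apply: mulr_ge0 => //.
  by apply: mulr_ge0 => //; apply: ltW.
have Ln : L != 0 by rewrite gt_eqF.
apply: (@lt_le_trans _ _ ((1 + s) / (2 * L))).
  apply: divr_gt0; first by apply: ltr_pwDl.
  by apply: mulr_gt0.
apply: H.
have -> : L * ((1 + s) / (2 * L)) ^+ 2 = (1 + 2 * s + s ^+ 2) / (4 * L).
  by field.
rewrite hs; by field.
Qed.

Lemma dotp0r (R : realType) (n : nat) (l : 'rV[R]_n) : dotp l 0 = 0.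
Proof. by rewrite -(scale0r (0 : 'rV[R]_n)) dotpZr mul0r. Qed.

Theorem lemma4 (R : realType) (n : nat) (nrm : 'rV[R]_n -> R)
  (Q : set 'rV[R]_n) (f h d : 'rV[R]_n -> R) (gradf gradd : 'rV[R]_n -> 'rV[R]_n)
  (L delta L0 : R) (fd : 'rV[R]_n -> R) (gd : 'rV[R]_n -> 'rV[R]_n)
  (x0 : 'rV[R]_n) (Lacc alpha A : nat -> R) (y u x : nat -> 'rV[R]_n) :
  is_norm nrm ->
  closed Q -> convex_set Q ->
  convex_on Q f -> {within Q, continuous f} ->
  (forall z, Q z -> has_gradient f (gradf z) z) ->
  (forall z w, Q z -> Q w ->
     dual_norm nrm (gradf z - gradf w) <= L * nrm (z - w)) ->
  convex_on Q h ->
  (forall z, Q z -> has_gradient d (gradd z) z) ->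
  {within Q, continuous gradd} ->
  strongly_convex1 nrm Q d gradd ->
  inexact_oracle nrm Q f delta L fd gd ->
  Q x0 -> 0 < L0 -> L0 <= L ->
  mtm_run nrm Q h d gradd delta L0 fd gd x0 Lacc alpha A y u x ->
  forall (k : nat) (z : 'rV[R]_n), Q z ->
    A k.+1 * (f (x k.+1) + h (x k.+1)) - A k * (f (x k) + h (x k))
      + bregman d gradd z (u k.+1) - bregman d gradd z (u k)
    <= alpha k.+1 * (f z + h z) + 2 * delta * A k.+1.
Proof.
move=> Hn cQc cQ cf fcont fgrad fLip ch dgrad gcont sc orc Qx0 L0p L0L run k z Qz.
case: run => [y0 [u0 [x0e [al0 [A0 step]]]]].
have Lpos : forall k, 0 < Lacc k.
  elim=> [|m IH]; [have [[j ->] _] := step 0%N | have [[j ->] _] := step m.+1];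
    by apply: mulr_gt0; [apply: divr_gt0 | apply: exprn_gt0].
have comb : forall (a b : R) (p q : 'rV[R]_n), 0 <= b -> 0 < a ->
    (b + a)^-1 *: (a *: p + b *: q) = (a / (b + a)) *: p + (1 - a / (b + a)) *: q.
  move=> a b p q b0 a0; have ba : b + a != 0 by rewrite gt_eqF // ltr_wpDl.
  by apply/rowP => i; rewrite !mxE; field.
have combQ : forall (a b : R) (p q : 'rV[R]_n), 0 <= b -> 0 < a -> Q p -> Q q ->
    Q ((b + a)^-1 *: (a *: p + b *: q)).
  move=> a b p q b0 a0 Qp Qq; rewrite comb //; apply: convQ => //.
    by apply: divr_ge0; apply: ltW => //; rewrite ltr_wpDl.
  by rewrite ler_pdivrMr ?mul1r ?lerDr // ltr_wpDl.
have Inv : forall k, [/\ 0 <= A k, Q (u k) & Q (x k)].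
  elim=> [|m [Am Qum Qxm]]; first by rewrite A0 u0 x0e lexx.
  have [_ [[eqa maxa] [eA [ey [[Qu' _] [ex _]]]]]] := step m.
  have ap : 0 < alpha m.+1 := root_pos _ _ _ _ (Lpos m) Am maxa.
  split => //; first by rewrite eA; apply: addr_ge0 => //; apply: ltW.
  by rewrite ex eA; apply: combQ.
have [Ak Quk Qxk] := Inv k.
have [_ [[eqa maxa] [eA [ey [[Qu' Hmin] [ex acc]]]]]] := step k.
have ap : 0 < alpha k.+1 := root_pos _ _ _ _ (Lpos k) Ak maxa.
have Qy : Q (y k.+1) by rewrite ey eA; apply: combQ.
have Qxp : Q (x k.+1) by rewrite ex eA; apply: combQ.
rewrite eA; rewrite eA in ex ey.
set a := alpha k.+1 in eqa maxa eA ey ex Hmin acc ap Qy Qxp *.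
set B := A k in Ak eqa maxa eA ey ex Hmin acc Qy Qxp *.
set Lk := Lacc k in eqa acc *.
set yk := y k.+1 in ey Hmin acc Qy *.
set xp := x k.+1 in ex acc Qxp *.
set up := u k.+1 in ex Hmin Qu' *.
set uk := u k in ey Hmin Quk *.
set xk := x k in ey ex Qxk *.
set g := gd yk in Hmin acc *.
have Apos : 0 < B + a by rewrite ltr_wpDl.
have Anz : B + a != 0 by rewrite gt_eqF.
set T := (B + a)^-1.
set N := nrm (up - uk).
set D1 := dotp g (up - yk).
set D2 := dotp g (xk - yk).
case: Hn => [nn n0 nZ nD].
have nrm0 : nrm 0 = 0.
  by rewrite -(scale0r (0 : 'rV[R]_n)) nZ normr0 mul0r.
have Fa : f xp <= fd xp + delta.
  have [_ hb] := orc xp xp Qxp Qxp.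
  by move: hb; rewrite subrr dotp0r nrm0 expr0n /= mulr0 add0r subr0; lra.
have Fc : nrm (xp - yk) = T * a * N.
  have -> : xp - yk = (T * a) *: (up - uk).
    by rewrite ex ey; apply/rowP => i; rewrite !mxE /T; field.
  rewrite nZ ger0_norm //; apply: mulr_ge0; [rewrite invr_ge0; exact: ltW | exact: ltW].
have Fd : dotp g (xp - yk) = T * (a * D1 + B * D2).
  have -> : xp - yk = T *: (a *: (up - yk) + B *: (xk - yk)).
    by rewrite ex; apply/rowP => i; rewrite !mxE /T; field.
  by rewrite dotpZr dotpDr !dotpZr.
have F0 : f xp <= fd yk + T * (a * D1 + B * D2) + Lk / 2 * (T * a * N) ^+ 2 + 2 * delta.
  by move: acc; rewrite Fd Fc; lra.
have E1 : (B + a) * (Lk / 2 * (T * a * N) ^+ 2) = N ^+ 2 / 2.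
  have -> : (B + a) * (Lk / 2 * (T * a * N) ^+ 2) = (Lk * a ^+ 2) * N ^+ 2 / (2 * (B + a)).
    by rewrite /T; field.
  by rewrite -eqa; field.
have E2 : (B + a) * (T * (a * D1 + B * D2)) = a * D1 + B * D2.
  by rewrite mulrA /T mulfV // mul1r.
have F1 : (B + a) * f xp <= (B + a) * fd yk + a * D1 + B * D2 + N ^+ 2 / 2 + 2 * delta * (B + a).
  have := ler_wpM2l (ltW Apos) F0.
  have E3 : (B + a) * (fd yk + T * (a * D1 + B * D2) + Lk / 2 * (T * a * N) ^+ 2 + 2 * delta)
     = (B + a) * fd yk + (B + a) * (T * (a * D1 + B * D2)) + (B + a) * (Lk / 2 * (T * a * N) ^+ 2) + 2 * delta * (B + a).
    by ring.
  rewrite E3 E1 E2; lra.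
have Fe : B * (fd yk + D2) <= B * f xk.
  have [he _] := orc xk yk Qxk Qy.
  by apply: ler_wpM2l => //; rewrite /D2; lra.
have Ff : (B + a) * h xp <= a * h up + B * h xk.
  have exc : xp = (a / (B + a)) *: up + (1 - a / (B + a)) *: xk by rewrite ex comb.
  have t0 : 0 <= a / (B + a) by apply: divr_ge0; apply: ltW.
  have t1 : a / (B + a) <= 1 by rewrite ler_pdivrMr ?mul1r ?lerDr.
  have := ch up xk (a / (B + a)) Qu' Qxk (andb_true_intro (conj t0 t1)).
  rewrite -exc => hc.
  have := ler_wpM2l (ltW Apos) hc.
  have -> : (B + a) * (a / (B + a) * h up + (1 - a / (B + a)) * h xk) = a * h up + B * h xk.
    by field.
  by [].
have Fg := @three_point R n Q d gradd
  (fun w => a * (fd yk + dotp g (w - yk) + h w)) uk up z cQ Qu' Qz (dgrad up Qu').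
have Fg' : bregman d gradd up uk + a * (fd yk + D1 + h up) + bregman d gradd z up
    <= bregman d gradd z uk + a * (fd yk + dotp g (z - yk) + h z).
  apply: Fg => //.
  move=> w1 w2 s Q1 Q2 hs /=.
  have -> : s *: w1 + (1 - s) *: w2 - yk = s *: (w1 - yk) + (1 - s) *: (w2 - yk).
    by apply/rowP => i; rewrite !mxE; ring.
  rewrite (dotpDr R n g (s *: (w1 - yk))) (dotpZr R n g (w1 - yk) s) (dotpZr R n g (w2 - yk) (1 - s)).
  have := ler_wpM2l (ltW ap) (ch w1 w2 s Q1 Q2 hs).
  lra.
have Fh : N ^+ 2 / 2 <= bregman d gradd up uk.
  have := sc up uk Qu' Quk; rewrite /bregman -/N; lra.
have Fi : a * (fd yk + dotp g (z - yk)) <= a * f z.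
  have [hi _] := orc z yk Qz Qy.
  by apply: ler_wpM2l; [exact: ltW | lra].
lra.
Qed.
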